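(* Let $\kappa$ be an uncountable regular cardinal, let $\mathcal{I}$ be a $\kappa$-complete proper ideal on $\kappa$ containing every bounded subset of $\kappa$, and suppose $\mathcal{I}$ contains an unbounded subset of $\kappa$. Let $\nu\in\{2,\kappa\}$. Then for every $1\le\alpha<\kappa^+$, neither $\boldsymbol{\Sigma}^0_\alpha({}^{\kappa}\nu,\tau_{\mathcal{I}})$ nor $\boldsymbol{\Pi}^0_\alpha({}^{\kappa}\nu,\tau_{\mathcal{I}})$ has a ${}^{\kappa}2$-universal set.
   Context: ${}^{\kappa}\nu$ is the set of functions $\kappa\to\nu$; $\tau_{\mathcal{I}}$ is the topology generated by the sets $\mathbf{N}_f=\{x:f\subseteq x\}$ for $f\colon D\to\nu$ with $D\in\mathcal{I}$. For a topological space $X$: $\boldsymbol{\Sigma}^0_1(X)$ = open sets, $\boldsymbol{\Pi}^0_1(X)$ = closed sets; for $\alpha>1$, $\boldsymbol{\Sigma}^0_\alpha(X)$ consists of unions $\bigcup_{\gamma<\kappa}A_\gamma$ with $A_\gamma\in\bigcup_{1\le\beta<\alpha}\boldsymbol{\Pi}^0_\beta(X)$, and $\boldsymbol{\Pi}^0_\alpha(X)$ the complements of $\boldsymbol{\Sigma}^0_\alpha(X)$ sets. For a class $\boldsymbol{\Gamma}$ and spaces $Y,X$, a set $\mathcal{U}\subseteq Y\times X$ is $Y$-universal for $\boldsymbol{\Gamma}(X)$ if $\mathcal{U}\in\boldsymbol{\Gamma}(Y\times X)$ and $\boldsymbol{\Gamma}(X)=\{\mathcal{U}_y: y\in Y\}$,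 where $\mathcal{U}_y=\{x:(y,x)\in\mathcal{U}\}$. Here $Y={}^{\kappa}2$ and $X=({}^{\kappa}\nu,\tau_{\mathcal{I}})$ (the conclusion holds whatever topology is placed on $Y\times X$). *)

(* Defs.v *)
(* Plain Rocq (no library needed): sets are predicates T -> Prop, and all
   classes below are closed under extensional equality of sets. *)

Definition eqset {T : Type} (A B : T -> Prop) : Prop := forall x, A x <-> B x.

Definition inj {A B : Type} (f : A -> B) : Prop := forall a b, f a = f b -> a = b.

Definition is_strict_wellorder {O : Type} (lt : O -> O -> Prop) : Prop :=
  well_founded lt /\
  (forall x y z, lt x y -> lt y z -> lt x z) /\
  (forall x y, lt x y \/ x = y \/ lt y x).

(* (K, lt) is an initial ordinal: every proper initial segment has
   cardinality strictly smaller than K. *)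
Definition is_cardinal {K : Type} (lt : K -> K -> Prop) : Prop :=
  forall x : K, ~ exists f : K -> {y : K | lt y x}, inj f.

Definition bounded {K : Type} (lt : K -> K -> Prop) (B : K -> Prop) : Prop :=
  exists x, forall y, B y -> lt y x.

Definition is_regular {K : Type} (lt : K -> K -> Prop) : Prop :=
  forall B : K -> Prop, ~ bounded lt B -> exists f : K -> {y : K | B y}, inj f.

Definition uncountable (K : Type) : Prop := ~ exists f : K -> nat, inj f.

(* Unions of fewer than kappa sets are indexed by proper initial segments
   {i | i < x} of kappa. *)
Definition kappa_complete_proper_ideal {K : Type} (lt : K -> K -> Prop)
    (I : (K -> Prop) -> Prop) : Prop :=
  (forall A B, I B -> (forall y, A y -> B y) -> I A) /\
  (forall (f : K -> K -> Prop) (x : K),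
      (forall i, lt i x -> I (f i)) -> I (fun y => exists i, lt i x /\ f i y)) /\
  ~ I (fun _ => True).

Definition is_topology {T : Type} (op : (T -> Prop) -> Prop) : Prop :=
  (forall A B, eqset A B -> op A -> op B) /\
  op (fun _ => True) /\
  (forall F : (T -> Prop) -> Prop, (forall C, F C -> op C) ->
      op (fun x => exists C, F C /\ C x)) /\
  (forall A B, op A -> op B -> op (fun x => A x /\ B x)).

Inductive gen_open {T : Type} (Bs : (T -> Prop) -> Prop) : (T -> Prop) -> Prop :=
| go_basic A B : Bs B -> eqset A B -> gen_open Bs A
| go_full A : eqset A (fun _ => True) -> gen_open Bs A
| go_union A (F : (T -> Prop) -> Prop) :
    (forall C, F C -> gen_open Bs C) ->
    eqset A (fun x => exists C, F C /\ C x) -> gen_open Bs A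
| go_inter A C D : gen_open Bs C -> gen_open Bs D ->
    eqset A (fun x => C x /\ D x) -> gen_open Bs A.

(* tau_I on ^kappa nu (nu represented by the type V): generated by the
   N_f = {x | f ⊆ x}, f : D -> V, D ∈ I  (f given as g restricted to D). *)
Definition tauI {K V : Type} (I : (K -> Prop) -> Prop) : ((K -> V) -> Prop) -> Prop :=
  gen_open (fun B => exists (D : K -> Prop) (g : K -> V),
                I D /\ eqset B (fun x => forall i, D i -> x i = g i)).

(* The ordinal alpha (1 <= alpha < kappa^+) is represented by an element o of a
   well-ordered type (O, ltO) with |O| <= kappa: alpha = 1 + ordertype{p | p < o}.
   The ordinals 1 <= beta < alpha are then the 1 + ordertype{q | q < p}, p < o.
   Unions are indexed by K (i.e. of length kappa). *)
Inductive Sigma0 {T : Type} (op : (T -> Prop) -> Prop) {O : Type}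
    (ltO : O -> O -> Prop) (K : Type) : O -> (T -> Prop) -> Prop :=
| S_open o A : (forall p, ~ ltO p o) -> op A -> Sigma0 op ltO K o A
| S_union o A (f : K -> T -> Prop) :
    (exists p, ltO p o) ->
    (forall i, exists p, ltO p o /\ Sigma0 op ltO K p (fun x => ~ f i x)) ->
    eqset A (fun x => exists i, f i x) -> Sigma0 op ltO K o A.

Definition Pi0 {T : Type} (op : (T -> Prop) -> Prop) {O : Type}
    (ltO : O -> O -> Prop) (K : Type) (o : O) (A : T -> Prop) : Prop :=
  Sigma0 op ltO K o (fun x => ~ A x).

Definition is_universal {Y X : Type} (GammaX : (X -> Prop) -> Prop)
    (GammaYX : (Y * X -> Prop) -> Prop) (U : Y * X -> Prop) : Prop :=
  GammaYX U /\
  forall A : X -> Prop, GammaX A <-> exists y : Y, eqset A (fun x => U (y, x)).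

(* For X = (^kappa V, tau_I) and Y = ^kappa 2, for every 1 <= alpha < kappa^+
   and whatever topology is put on Y × X, neither Sigma^0_alpha(X) nor
   Pi^0_alpha(X) has a Y-universal set. *)
Definition no_universal_sets {K : Type} (I : (K -> Prop) -> Prop) (V : Type) : Prop :=
  forall (O : Type) (ltO : O -> O -> Prop) (o : O),
    is_strict_wellorder ltO -> (exists g : O -> K, inj g) ->
    forall opYX : ((K -> bool) * (K -> V) -> Prop) -> Prop,
      is_topology opYX ->
      (~ exists U, is_universal (Sigma0 (tauI I) ltO K o) (Sigma0 opYX ltO K o) U) /\
      (~ exists U, is_universal (Pi0 (tauI I) ltO K o) (Pi0 opYX ltO K o) U).

(* Main.v *)
Require Import Defs.
From Stdlib Require Import Classical ClassicalEpsilon ClassicalDescription FunctionalExtensionality ProofIrrelevance.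

Lemma sigma_clopen {T : Type} (op : (T -> Prop) -> Prop) {O : Type}
  (ltO : O -> O -> Prop) (K : Type) (k0 : K) (Hwf : well_founded ltO)
  (Hop : forall A, op A -> op (fun x => ~ ~ A x)) :
  forall o A, op A -> op (fun x => ~ A x) -> Sigma0 op ltO K o A.
Proof.
  intro o. induction o as [o IH] using (well_founded_induction Hwf).
  intros A HA HnA.
  destruct (classic (exists p, ltO p o)) as [[p Hp]|Hn].
  - apply (S_union op ltO K o A (fun _ => A)).
    + exists p; exact Hp.
    + intros _. exists p. split; [exact Hp|]. apply IH; auto.
    + intro x; split; [intro H; exists k0; exact H | intros [_ H]; exact H].
  - apply S_open; auto. intros p Hp; apply Hn; exists p; exact Hp.
Qed.

Lemma tauI_eq {K V : Type} (I : (K -> Prop) -> Prop) (A B : (K -> V) -> Prop) :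
  tauI I A -> eqset A B -> tauI I B.
Proof.
  intros HA HAB. apply (go_union _ B (fun C => C = A)).
  - intros C ->; exact HA.
  - intro x; split.
    + intro Hb; exists A; split; auto; apply HAB; exact Hb.
    + intros [C [-> HC]]; apply HAB; exact HC.
Qed.

Section Main.
Variables (K : Type) (I : (K -> Prop) -> Prop) (V : Type) (v0 v1 : V)
  (Hv : v0 <> v1) (k0 : K) (D : K -> Prop) (ID : I D) (e : K -> K)
  (He : inj e) (HD : forall k, D (e k)).

Definition dec (x : K -> V) : K -> bool :=
  fun k => if excluded_middle_informative (x (e k) = v1) then true else false.

Definition enc (y : K -> bool) : K -> V :=
  fun j => match excluded_middle_informative (exists k, e k = j) with
           | left H => if y (proj1_sig (constructive_indefinite_description _ H)) then v1 else v0
           | right _ => v0 end.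

Lemma dec_enc y : dec (enc y) = y.
Proof.
  apply functional_extensionality; intro k. unfold dec, enc.
  destruct (excluded_middle_informative (exists k', e k' = e k)) as [H|H].
  - destruct (constructive_indefinite_description _ H) as [k' Hk']; simpl.
    apply He in Hk'; subst k'.
    destruct (y k); destruct (excluded_middle_informative _); auto; congruence.
  - exfalso; apply H; exists k; reflexivity.
Qed.

Lemma open_dec (P : (K -> bool) -> Prop) : tauI I (fun x => P (dec x)).
Proof.
  apply (go_union _ _ (fun C => exists x', P (dec x') /\
           C = (fun z => forall i, D i -> z i = x' i))).
  - intros C [x' [_ ->]]. apply (go_basic _ _ (fun z => forall i, D i -> z i = x' i)).
    + exists D, x'. split; [exact ID| intro z; split; auto].
    + intro z; split; auto.
  - intro x; split.
    + intro Hx. exists (fun z => forall i, D i -> z i = x i). split; auto.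
      exists x; split; auto.
    + intros [C [[x' [Hx' ->]] Hc]].
      replace (dec x) with (dec x'); auto.
      apply functional_extensionality; intro k; unfold dec. rewrite (Hc (e k) (HD k)).
      reflexivity.
Qed.

Lemma main_gen : no_universal_sets I V.
Proof.
  intros O ltO o [Hwf _] _ opYX _.
  assert (Hsig : forall P : (K -> bool) -> Prop,
            Sigma0 (tauI I) ltO K o (fun x => P (dec x))).
  { intro P. apply sigma_clopen; auto.
    - intros A HA. apply (tauI_eq I A); auto. intro x; split; auto; apply NNPP.
    - apply (open_dec (fun y => P y)).
    - apply (open_dec (fun y => ~ P y)). }
  split; intros [U [_ HU]].
  - destruct (proj1 (HU (fun x => ~ U (dec x, enc (dec x)))) (Hsig (fun y => ~ U (y, enc y)))) as [y0 Hy0].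
    specialize (Hy0 (enc y0)). simpl in Hy0. rewrite dec_enc in Hy0. tauto.
  - assert (Hp : Pi0 (tauI I) ltO K o (fun x => ~ U (dec x, enc (dec x)))).
    { unfold Pi0. apply (Hsig (fun y => ~ ~ U (y, enc y))). }
    destruct (proj1 (HU _) Hp) as [y0 Hy0].
    specialize (Hy0 (enc y0)). simpl in Hy0. rewrite dec_enc in Hy0. tauto.
Qed.
End Main.

Theorem proposition4p10 (K : Type) (lt : K -> K -> Prop) (I : (K -> Prop) -> Prop)
  (Hwo : is_strict_wellorder lt) (Hcard : is_cardinal lt)
  (Hunc : uncountable K) (Hreg : is_regular lt)
  (HI : kappa_complete_proper_ideal lt I)
  (Hbdd : forall B : K -> Prop, bounded lt B -> I B)
  (Hunb : exists B : K -> Prop, I B /\ ~ bounded lt B) :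
  no_universal_sets I bool /\ no_universal_sets I K.
Proof.
  destruct Hunb as [D [ID HnD]].
  destruct (Hreg D HnD) as [f Hf].
  assert (He : inj (fun k => proj1_sig (f k))).
  { intros a b H. apply Hf. destruct (f a), (f b); simpl in H; subst.
    f_equal; apply proof_irrelevance. }
  assert (HD : forall k, D (proj1_sig (f k))) by (intro k; exact (proj2_sig (f k))).
  assert (H2 : exists a b : K, a <> b).
  { apply NNPP; intro Hn. apply Hunc. exists (fun _ => 0). intros a b _.
    apply NNPP; intro Hab; apply Hn; exists a, b; exact Hab. }
  destruct H2 as [a [b Hab]].
  split.
  - exact (main_gen K I bool false true ltac:(discriminate) a D ID _ He HD).
  - exact (main_gen K I K a b Hab a D ID _ He HD).
Qed.
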